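(* (1) $E^{\partial}_{FTP}$ is sound for bisimilarity on $T(\Sigma^{\partial}_{FTP})$, i.e. whenever $E^{\partial}_{FTP}\vdash s=t$ for closed $s,t\in T(\Sigma^{\partial}_{FTP})$ then $s\sim t$. (2) For every $t\in T(\Sigma^{\partial}_{FTP})$ there exists $t'\in T(\Sigma_{FTP})$ such that $E^{\partial}_{FTP}\vdash t=t'$.
   Context: Fix a finite nonempty set $\mathcal A$ of actions, a finite set $\mathcal P$ of predicates, a subset $\mathcal P^I\subseteq\mathcal P$ of implicit predicates, and for each $P\in\mathcal P^I$ a set $\mathcal A_P\subseteq\mathcal A$. $\Sigma_{FTP}$ consists of $\delta$, constants $\kappa_P$ ($P\in\mathcal P$), prefixes $a.\_$ ($a\in\mathcal A$), and binary $+$. $\Sigma^\partial_{FTP}$ extends it with a unary operation $\partial_{\mathcal B,\mathcal Q}$ for every $\mathcal B\subseteq\mathcal A$, $\mathcal Q\subseteq\mathcal P$. Semantics on closed terms: the least relations closed under: $a.x\xrightarrow{a}x$; $x\xrightarrow{a}x'\Rightarrow x+y\xrightarrow{a}x'$; $y\xrightarrow{a}y'\Rightarrow x+y\xrightarrow{a}y'$; $P\kappa_P$; $Px\Rightarrow P(x+y)$; $Py\Rightarrow P(x+y)$; $Px\Rightarrow P(a.x)$ for $P\in\mathcal P^I$, $a\in\mathcal A_P$; $x\xrightarrow{a}x'\Rightarrow \partial_{\mathcal B,\mathcal Q}(x)\xrightarrow{a}\partial_{\emptyset,\mathcal Q\cap\mathcal P^I}(x')$ if $a\notin\mathcal B$;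 $Px\Rightarrow P(\partial_{\mathcal B,\mathcal Q}(x))$ if $P\notin\mathcal Q$. Bisimulation: symmetric $R$ such that $(s,t)\in R$ and $s\xrightarrow{a}s'$ imply $t\xrightarrow{a}t'$ with $(s',t')\in R$, and $Ps$ implies $Pt$; $\sim$ is the union of all bisimulations. $E_{FTP}$: $x+y=y+x$, $(x+y)+z=x+(y+z)$, $x+x=x$, $x+\delta=x$, $a.(x+\kappa_P)=a.(x+\kappa_P)+\kappa_P$ ($P\in\mathcal P^I$, $a\in\mathcal A_P$). $E^\partial_{FTP}$ is $E_{FTP}$ plus, for all $\mathcal B,\mathcal Q$: $\partial_{\mathcal B,\mathcal Q}(\delta)=\delta$; $\partial_{\mathcal B,\mathcal Q}(\kappa_P)=\delta$ if $P\in\mathcal Q$; $\partial_{\mathcal B,\mathcal Q}(\kappa_P)=\kappa_P$ if $P\notin\mathcal Q$; $\partial_{\mathcal B,\mathcal Q}(a.x)=\sum_{P\notin\mathcal Q,\,P(a.x)}\kappa_P$ if $a\in\mathcal B$ (a schema: for each closed instance of $x$, the sum ranges over the predicates $P\notin\mathcal Q$ satisfied by $a.x$); $\partial_{\mathcal B,\mathcal Q}(a.x)=\partial_{\emptyset,\mathcal Q}(a.x)$ if $a\notin\mathcal B$; $\partial_{\emptyset,\mathcal Q}(a.x)=a.\partial_{\emptyset,\mathcal Q\cap\mathcal P^I}(x)$; $\partial_{\mathcal B,\mathcal Q}(x+y)=\partial_{\mathcal B,\mathcal Q}(x)+\partial_{\mathcal B,\mathcal Q}(y)$. $\vdash$ denotes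 derivability in equational logic. *)

(* Defs.v *)
From mathcomp Require Import all_boot.
Set Implicit Arguments. Unset Strict Implicit. Unset Printing Implicit Defensive.

(* Closed terms over Sigma^partial_FTP.  Terms over Sigma_FTP are those
   without the encapsulation operator (predicate [is_ftp]). *)
Section Terms.
Variables (A Pr : finType).

Inductive term : Type :=
| TDelta : term
| TKappa : Pr -> term
| TPre   : A -> term -> term
| TPlus  : term -> term -> term
| TEnc   : {set A} -> {set Pr} -> term -> term.

Fixpoint is_ftp (t : term) : bool :=
  match t with
  | TDelta => true
  | TKappa _ => true
  | TPre _ x => is_ftp x
  | TPlus x y => is_ftp x && is_ftp y
  | TEnc _ _ _ => false
  end.

Fixpoint sumk (l : seq Pr) : term :=
  match l with
  | [::] => TDelta
  | [:: p] => TKappa p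
  | p :: l' => TPlus (TKappa p) (sumk l')
  end.
End Terms.
Arguments TDelta {A Pr}.
Arguments TKappa {A Pr} _.
Arguments TPre {A Pr} _ _.
Arguments TPlus {A Pr} _ _.
Arguments TEnc {A Pr} _ _ _.
Arguments sumk {A Pr} _.


Section Semantics.

Variables (A Pr : finType) (PI : {set Pr}) (AP : Pr -> {set A}).
(* PI = implicit predicates; AP P = the set A_P (only relevant for P in PI) *)

Inductive step : term A Pr -> A -> term A Pr -> Prop :=
| st_pre a x : step (TPre a x) a x
| st_plusl x y a x' : step x a x' -> step (TPlus x y) a x'
| st_plusr x y a y' : step y a y' -> step (TPlus x y) a y'
| st_enc (B : {set A}) (Q : {set Pr}) x a x' : a \notin B -> step x a x' ->
    step (TEnc B Q x) a (TEnc set0 (Q :&: PI) x').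

Inductive holds : Pr -> term A Pr -> Prop :=
| h_kappa P : holds P (TKappa P)
| h_plusl P x y : holds P x -> holds P (TPlus x y)
| h_plusr P x y : holds P y -> holds P (TPlus x y)
| h_pre P a x : P \in PI -> a \in AP P -> holds P x -> holds P (TPre a x)
| h_enc P (B : {set A}) (Q : {set Pr}) x : P \notin Q -> holds P x -> holds P (TEnc B Q x).

Definition bisimulation (R : term A Pr -> term A Pr -> Prop) : Prop :=
  (forall s t, R s t -> R t s) /\
  (forall s t a s', R s t -> step s a s' -> exists t', step t a t' /\ R s' t') /\
  (forall s t P, R s t -> holds P s -> holds P t).

Definition bisimilar (s t : term A Pr) : Prop :=
  exists R, bisimulation R /\ R s t.

(* closed instances of the axioms of E^partial_FTP *)
Inductive axiom : term A Pr -> term A Pr -> Prop :=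
| ax_comm x y : axiom (TPlus x y) (TPlus y x)
| ax_assoc x y z : axiom (TPlus (TPlus x y) z) (TPlus x (TPlus y z))
| ax_idem x : axiom (TPlus x x) x
| ax_delta x : axiom (TPlus x TDelta) x
| ax_impl P a x : P \in PI -> a \in AP P ->
    axiom (TPre a (TPlus x (TKappa P)))
          (TPlus (TPre a (TPlus x (TKappa P))) (TKappa P))
| ax_enc_delta (B : {set A}) (Q : {set Pr}) : axiom (TEnc B Q TDelta) TDelta
| ax_enc_kappa_in (B : {set A}) (Q : {set Pr}) P : P \in Q -> axiom (TEnc B Q (TKappa P)) TDelta
| ax_enc_kappa_out (B : {set A}) (Q : {set Pr}) P : P \notin Q -> axiom (TEnc B Q (TKappa P)) (TKappa P)
| ax_enc_block (B : {set A}) (Q : {set Pr}) a x (l : seq Pr) : a \in B -> uniq l ->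
    (forall P, P \in l <-> (P \notin Q /\ holds P (TPre a x))) ->
    axiom (TEnc B Q (TPre a x)) (sumk l)
| ax_enc_pass (B : {set A}) (Q : {set Pr}) a x : a \notin B ->
    axiom (TEnc B Q (TPre a x)) (TEnc set0 Q (TPre a x))
| ax_enc_pre (Q : {set Pr}) a x :
    axiom (TEnc set0 Q (TPre a x)) (TPre a (TEnc set0 (Q :&: PI) x))
| ax_enc_plus (B : {set A}) (Q : {set Pr}) x y :
    axiom (TEnc B Q (TPlus x y)) (TPlus (TEnc B Q x) (TEnc B Q y)).

Inductive derivable : term A Pr -> term A Pr -> Prop :=
| d_ax s t : axiom s t -> derivable s t
| d_refl t : derivable t t
| d_sym s t : derivable s t -> derivable t s
| d_trans s t u : derivable s t -> derivable t u -> derivable s u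
| d_pre a s t : derivable s t -> derivable (TPre a s) (TPre a t)
| d_plus s s' t t' : derivable s s' -> derivable t t' ->
    derivable (TPlus s t) (TPlus s' t')
| d_enc (B : {set A}) (Q : {set Pr}) s t : derivable s t -> derivable (TEnc B Q s) (TEnc B Q t).
End Semantics.

(* Main.v *)
Require Import Defs.
From mathcomp Require Import all_boot.
From Stdlib Require Import Classical.
Set Implicit Arguments. Unset Strict Implicit.

Section Proofs.
Variables (A Pr : finType) (PI : {set Pr}) (AP : Pr -> {set A}).

Notation bis := (bisimilar PI AP).
Notation st := (step PI).
Notation hd := (holds PI AP).

Lemma bis_refl s : bis s s.
Proof.
exists (fun x y => x = y); split=>//; split.
- by move=> ??->.
split.
- by move=> s0 t a s' -> H; exists s'.
- by move=> s0 t P ->.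
Qed.

Lemma bis_sym s t : bis s t -> bis t s.
Proof. move=> [R [[H1 H2] H3]]; exists R; split; [by split | by apply: H1]. Qed.

Lemma bis_step s t a s' : bis s t -> st s a s' -> exists t', st t a t' /\ bis s' t'.
Proof.
move=> [R [[H1 [H2 H3]] HR]] Hs.
have [t' [Ht HR']] := H2 _ _ _ _ HR Hs.
by exists t'; split=>//; exists R; split=>//; split.
Qed.

Lemma bis_holds s t P : bis s t -> hd P s -> hd P t.
Proof. by move=> [R [[H1 [H2 H3]] HR]]; apply: H3. Qed.

Lemma bis_trans s t u : bis s t -> bis t u -> bis s u.
Proof.
move=> H1 H2.
exists (fun x z => exists y, bis x y /\ bis y z); split; last by exists t.
split; first by move=> x z [y [Ha Hb]]; exists y; split; apply: bis_sym.
split.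
- move=> x z a x' [y [Ha Hb]] Hx.
  have [y' [Hy Hy']] := bis_step Ha Hx.
  have [z' [Hz Hz']] := bis_step Hb Hy.
  by exists z'; split=>//; exists y'.
- move=> x z P [y [Ha Hb]] Hx.
  by apply: (bis_holds Hb); apply: (bis_holds Ha).
Qed.

Lemma bis_up (R : term A Pr -> term A Pr -> Prop) :
  (forall s t, R s t -> R t s) ->
  (forall s t a s', R s t -> st s a s' -> exists t', st t a t' /\ (R s' t' \/ bis s' t')) ->
  (forall s t P, R s t -> hd P s -> hd P t) ->
  forall s t, R s t -> bis s t.
Proof.
move=> Hs Hst Hh s t HR.
exists (fun x y => R x y \/ bis x y); split; last by left.
split; first by move=> x y [H|H]; [left; apply: Hs | right; apply: bis_sym].
split.
- move=> x y a x' [H|H] Hx; first by apply: Hst H Hx.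
  by have [y' [Hy Hy']] := bis_step H Hx; exists y'; split=>//; right.
- move=> x y P [H|H] Hx; [apply: Hh H Hx | apply: bis_holds H Hx].
Qed.

Lemma same_bis s t :
  (forall a u, st s a u <-> st t a u) -> (forall P, hd P s <-> hd P t) -> bis s t.
Proof.
move=> H1 H2.
apply: (bis_up (R := fun s t => (forall a u, st s a u <-> st t a u) /\ (forall P, hd P s <-> hd P t))); last by split.
- by move=> x y [Ha Hb]; split=> *; [rewrite Ha | rewrite Hb].
- move=> x y a x' [Ha Hb] Hx; exists x'; split; first by apply/(Ha a x').
  by right; apply: bis_refl.
- by move=> x y P [Ha Hb] /(Hb P).
Qed.

Lemma bis_plus x x' y y' : bis x x' -> bis y y' -> bis (TPlus x y) (TPlus x' y').
Proof.
move=> H1 H2.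
apply: (bis_up (R := fun s t => exists x x' y y', s = TPlus x y /\ t = TPlus x' y' /\ bis x x' /\ bis y y'));
 last by exists x, x', y, y'.
- move=> s t [a [b [c [d [-> [-> [Ha Hb]]]]]]].
  by exists b, a, d, c; do 3 split=>//; apply: bis_sym.
- move=> s t a s' [x1 [x2 [y1 [y2 [-> [-> [Ha Hb]]]]]]] Hs.
  inversion Hs; subst.
  + have [t' [Ht Ht']] := bis_step Ha ltac:(eassumption).
    by exists t'; split; [apply: st_plusl | right].
  + have [t' [Ht Ht']] := bis_step Hb ltac:(eassumption).
    by exists t'; split; [apply: st_plusr | right].
- move=> s t P [x1 [x2 [y1 [y2 [-> [-> [Ha Hb]]]]]]] Hs.
  inversion Hs; subst.
  + by apply: h_plusl; apply: bis_holds Ha ltac:(eassumption).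
  + by apply: h_plusr; apply: bis_holds Hb ltac:(eassumption).
Qed.

Lemma bis_pre a x y : bis x y -> bis (TPre a x) (TPre a y).
Proof.
move=> H.
apply: (bis_up (R := fun s t => exists a x y, s = TPre a x /\ t = TPre a y /\ bis x y));
 last by exists a, x, y.
- move=> s t [b [u [v [-> [-> Hb]]]]].
  by exists b, v, u; do 2 split=>//; apply: bis_sym.
- move=> s t b s' [c [u [v [-> [-> Hb]]]]] Hs.
  inversion Hs; subst.
  by exists v; split; [apply: st_pre | right].
- move=> s t P [c [u [v [-> [-> Hb]]]]] Hs.
  inversion Hs; subst.
  by apply: h_pre=>//; apply: bis_holds Hb ltac:(eassumption).
Qed.

Lemma bis_enc B Q x y : bis x y -> bis (TEnc B Q x) (TEnc B Q y).
Proof.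
move=> H.
apply: (bis_up (R := fun s t => exists B Q x y, s = TEnc B Q x /\ t = TEnc B Q y /\ bis x y));
 last by exists B, Q, x, y.
- move=> s t [B1 [Q1 [u [v [-> [-> Hb]]]]]].
  by exists B1, Q1, v, u; do 2 split=>//; apply: bis_sym.
- move=> s t b s' [B1 [Q1 [u [v [-> [-> Hb]]]]]] Hs.
  inversion Hs; subst.
  have [t' [Ht Ht']] := bis_step Hb ltac:(eassumption).
  exists (TEnc set0 (Q1 :&: PI) t'); split; first by apply: st_enc.
  by left; exists set0, (Q1 :&: PI), x', t'.
- move=> s t P [B1 [Q1 [u [v [-> [-> Hb]]]]]] Hs.
  inversion Hs; subst.
  by apply: h_enc=>//; apply: bis_holds Hb ltac:(eassumption).
Qed.

Lemma sumk_nostep (l : seq Pr) a u : ~ st (@sumk A Pr l) a u.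
Proof.
elim: l => [|p [|q l] IH] /= H; inversion H; subst=>//.
all: try (by apply: IH; eassumption).
all: match goal with H' : step _ (TKappa _) _ _ |- _ => inversion H' end.
Qed.

Lemma sumk_holds (l : seq Pr) P : hd P (@sumk A Pr l) <-> P \in l.
Proof.
elim: l => [|p [|q l] IH] /=.
- by split=>// H; inversion H.
- rewrite inE; split; first by move=> H; inversion H.
  by move/eqP=>->; apply: h_kappa.
- rewrite inE; split.
  + move=> H; inversion H; subst.
    * match goal with H' : holds _ _ _ (TKappa _) |- _ => inversion H'; subst end.
      by rewrite eqxx.
    * by apply/orP; right; apply/IH.
  + case/orP=> [/eqP->|H]; first by apply: h_plusl; apply: h_kappa.
    by apply: h_plusr; apply/IH.
Qed.

Ltac inv := repeat match goal with
 | H : step _ ?t _ _ |- _ => (is_var t; fail 1) || (inversion H; subst; clear H)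
 | H : holds _ _ _ ?t |- _ => (is_var t; fail 1) || (inversion H; subst; clear H)
end.

Ltac fin := try (by eauto 6 using st_pre, st_plusl, st_plusr, st_enc, h_kappa, h_plusl, h_plusr, h_pre, h_enc).

Lemma axiom_bis s t : axiom PI AP s t -> bis s t.
Proof.
case=> {s t}; last 4 first.
- move=> B Q a x l Ha Hu Hl; apply: same_bis => [b u|P']; split=> H.
  + inv; match goal with H: is_true (?x \notin ?S) |- _ => by rewrite Ha in H end.
  + by case: (sumk_nostep H).
  + by apply/sumk_holds/Hl; inv; split=>//; fin.
  + by move/sumk_holds/Hl: H => [H1 H2]; apply: h_enc.
all: intros; apply: same_bis => [b u|P']; split=> H; inv; fin.
all: try (match goal with H: is_true (?x \in ?S), H': is_true (?x \notin ?S) |- _ => by rewrite H in H' end).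
- by apply: st_enc; [rewrite inE | apply: st_pre].
- by apply: st_enc; [rewrite inE | apply: st_pre].
- apply: h_pre=>//; apply: h_enc=>//.
  by rewrite inE negb_and; apply/orP; left.
- apply: h_enc; last by apply: h_pre.
  by move: H3; rewrite inE H2 andbT.
Qed.

Lemma sound s t : derivable PI AP s t -> bis s t.
Proof.
elim=> {s t}.
- by move=> s t; apply: axiom_bis.
- by move=> t; apply: bis_refl.
- by move=> s t _; apply: bis_sym.
- by move=> s t u _ H1 _ H2; apply: bis_trans H1 H2.
- by move=> a s t _ H; apply: bis_pre.
- by move=> s s' t t' _ H1 _ H2; apply: bis_plus.
- by move=> B Q s t _ H; apply: bis_enc.
Qed.

Lemma list_of (p : Pr -> Prop) (s : seq Pr) : uniq s ->
  exists l, uniq l /\ forall P, P \in l <-> (P \in s /\ p P).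
Proof.
elim: s => [|x s IH] /=; first by exists [::]; split=>// P; split=>// [[]].
case/andP=> Hx Hs; have [l [Hl HP]] := IH Hs.
case: (classic (p x)) => Hp.
- exists (x :: l); split.
  + rewrite /= Hl andbT; apply/negP=> /HP [H _]; by rewrite H in Hx.
  + move=> P; rewrite !inE; split.
    * case/orP=> [/eqP->|/HP [H1 H2]]; first by rewrite eqxx.
      by rewrite H1 orbT.
    * case=> /orP [/eqP->|H1] H2; first by rewrite eqxx.
      by apply/orP; right; apply/HP.
- exists l; split=>// P; rewrite inE; split.
  + by move/HP=> [H1 H2]; rewrite H1 orbT.
  + case=> /orP [/eqP->|H1] H2 //; by apply/HP.
Qed.

Lemma sumk_ftp (l : seq Pr) : is_ftp (@sumk A Pr l).
Proof. by elim: l => [|p [|q l] IH] //=. Qed.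

Lemma enc_norm x : is_ftp x -> forall B Q,
  exists t', is_ftp t' /\ derivable PI AP (TEnc B Q x) t'.
Proof.
elim: x => [|P|a x IH|x IHx y IHy|B0 Q0 x IH] //= Hf B Q.
- by exists TDelta; split=>//; apply: d_ax; apply: ax_enc_delta.
- case: (boolP (P \in Q)) => HP.
  + by exists TDelta; split=>//; apply: d_ax; apply: ax_enc_kappa_in.
  + by exists (TKappa P); split=>//; apply: d_ax; apply: ax_enc_kappa_out.
- case: (boolP (a \in B)) => Ha.
  + have [l [Hu Hl]] := list_of (fun P => P \notin Q /\ hd P (TPre a x)) (enum_uniq Pr).
    exists (sumk l); split; first by apply: sumk_ftp.
    apply: d_ax; apply: ax_enc_block=>// P; rewrite Hl; split; [by case | by move=> Hp; split=>//; rewrite mem_enum].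
  + have [x' [Hx' Hd]] := IH Hf set0 (Q :&: PI).
    exists (TPre a x'); split=>//.
    apply: d_trans; first by apply: d_ax; apply: ax_enc_pass.
    apply: d_trans; first by apply: d_ax; apply: ax_enc_pre.
    by apply: d_pre.
- case/andP: Hf => Hx Hy.
  have [x' [Hx' Hdx]] := IHx Hx B Q.
  have [y' [Hy' Hdy]] := IHy Hy B Q.
  exists (TPlus x' y'); split; first by rewrite /= Hx' Hy'.
  apply: d_trans; first by apply: d_ax; apply: ax_enc_plus.
  by apply: d_plus.
Qed.

Lemma norm t : exists t', is_ftp t' /\ derivable PI AP t t'.
Proof.
elim: t => [|P|a x IH|x IHx y IHy|B Q x IH].
- by exists TDelta; split=>//; apply: d_refl.
- by exists (TKappa P); split=>//; apply: d_refl.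
- have [x' [H1 H2]] := IH; exists (TPre a x'); split=>//; by apply: d_pre.
- have [x' [H1 H2]] := IHx; have [y' [H3 H4]] := IHy.
  exists (TPlus x' y'); split; [by rewrite /= H1 H3 | by apply: d_plus].
- have [x' [H1 H2]] := IH.
  have [t' [H3 H4]] := enc_norm H1 B Q.
  exists t'; split=>//; apply: d_trans H4; by apply: d_enc.
Qed.

End Proofs.

Theorem theorem2 (A Pr : finType) (PI : {set Pr}) (AP : Pr -> {set A})
    (hA : 0 < #|A|) :
  (forall s t : term A Pr, derivable PI AP s t -> bisimilar PI AP s t) /\
  (forall t : term A Pr, exists t' : term A Pr, is_ftp t' /\ derivable PI AP t t').
Proof. split; [exact: sound | exact: norm]. Qed.
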